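(* Let $L=L(m,n;k,l)$ be an $L$-shaped supergrid graph with distinct vertices $s,t$ such that $m-k=1$, $n-l=2$, $l=1$, $k\ge 2$, and $\{s,t\}=\{(1,2),(2,3)\}$ or $\{s,t\}=\{(1,3),(2,2)\}$. Then every simple path between $s$ and $t$ in $L$ has at most $mn-kl-1$ vertices.
   Context: The infinite supergrid graph has as vertices all points $(x,y)\in\mathbb{Z}^2$, two distinct vertices $u,v$ being adjacent iff $|u_x-v_x|\le 1$ and $|u_y-v_y|\le 1$. For integers $m,n>1$ and $k,l\ge 1$ with $m-k\ge 1$, $n-l\ge 1$, $L(m,n;k,l)$ is the subgraph induced by $\{(x,y):1\le x\le m,\ 1\le y\le n\}\setminus\{(x,y): m-k+1\le x\le m,\ 1\le y\le l\}$ (so it has $mn-kl$ vertices). *)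

(* Defs.v *)
From mathcomp Require Import all_boot.
Set Implicit Arguments. Unset Strict Implicit. Unset Printing Implicit Defensive.

(* Vertices are points (x,y) of Z^2; all vertices of L(m,n;k,l) have positive
   coordinates, so we represent them as pairs of naturals. *)
Definition pt := (nat * nat)%type.

Definition sg_adj (u v : pt) : bool :=
  [&& u != v, u.1 <= v.1 + 1, v.1 <= u.1 + 1, u.2 <= v.2 + 1 & v.2 <= u.2 + 1].

Definition inL (m n k l : nat) (v : pt) : bool :=
  [&& 1 <= v.1 <= m, 1 <= v.2 <= n &
      ~~ ((m - k + 1 <= v.1 <= m) && (1 <= v.2 <= l))].

Definition simple_path_in_L (m n k l : nat) (s t : pt) (q : seq pt) : Prop :=
  [/\ all (inL m n k l) (s :: q), path sg_adj s q, uniq (s :: q) & last s q = t].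

(* Main.v *)
Require Import Defs.
From mathcomp Require Import all_boot zify.

Lemma nb11 m k v : m - k = 1 -> sg_adj (1,1) v -> inL m 3 k 1 v -> v = (1,2) \/ v = (2,2).
Proof.
case: v => x y mk; rewrite /sg_adj /inL /= xpair_eqE => H1 H2.
have : (x == 1) && (y == 2) || (x == 2) && (y == 2) by lia.
by case/orP => /andP[/eqP-> /eqP->]; auto.
Qed.

Lemma nb13 m k v : m - k = 1 -> sg_adj (1,3) v -> inL m 3 k 1 v ->
  v = (1,2) \/ v = (2,2) \/ v = (2,3).
Proof.
case: v => x y mk; rewrite /sg_adj /inL /= xpair_eqE => H1 H2.
have : [|| (x == 1) && (y == 2), (x == 2) && (y == 2) | (x == 2) && (y == 3)] by lia.
by case/or3P => /andP[/eqP-> /eqP->]; auto.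
Qed.

Lemma nb12 m k v : m - k = 1 -> sg_adj (1,2) v -> inL m 3 k 1 v ->
  v = (1,1) \/ v = (1,3) \/ v = (2,2) \/ v = (2,3).
Proof.
case: v => x y mk; rewrite /sg_adj /inL /= xpair_eqE => H1 H2.
have : [|| (x == 1) && (y == 1), (x == 1) && (y == 3), (x == 2) && (y == 2) | (x == 2) && (y == 3)] by lia.
by case/or4P => /andP[/eqP-> /eqP->]; auto.
Qed.

Lemma sg_adj_sym u v : sg_adj u v = sg_adj v u.
Proof. by rewrite /sg_adj eq_sym; lia. Qed.

Definition Lall m : seq pt := [:: (1,1);(1,2);(1,3)] ++ [seq (x,2) | x <- iota 2 (m-1)]
  ++ [seq (x,3) | x <- iota 2 (m-1)].

Lemma inLall m k v : m - k = 1 -> inL m 3 k 1 v -> v \in Lall m.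
Proof.
case: v => x y mk; rewrite /inL /= => H.
rewrite /Lall !mem_cat.
have [x1|x1] := eqVneq x 1.
  subst x; have : [|| y == 1, y == 2 | y == 3] by lia.
  by case/or3P => /eqP->.
have xi : x \in iota 2 (m-1) by rewrite mem_iota; lia.
have : (y == 2) || (y == 3) by lia.
by case/orP => /eqP->; rewrite (map_f (fun x => (x, _)) xi) ?orbT.
Qed.

Lemma count_bound m k v (P : seq pt) : 1 <= m -> m - k = 1 -> inL m 3 k 1 v -> v \notin P ->
  all (inL m 3 k 1) P -> uniq P -> size P <= 2 * m.
Proof.
move=> m1 mk Hv vP Hall Hu.
have : size P <= size [seq w <- Lall m | predC1 v w].
  apply: uniq_leq_size Hu _ => w wP.
  rewrite mem_filter /= (@inLall m k w mk (allP Hall w wP)) andbT.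
  by apply: contraNneq vP => <-.
rewrite size_filter.
have := count_predC (pred1 v) (Lall m).
have : 0 < count (pred1 v) (Lall m) by rewrite -has_count has_pred1 (@inLall m k v mk Hv).
have -> : size (Lall m) = (2 * m).+1 by rewrite /Lall !size_cat !size_map size_iota /=; lia.
move=> h1 h2 h3. 
have e : count (fun w => predC1 v w) (Lall m) = count (predC (pred1 v)) (Lall m) by apply: eq_count.
lia.
Qed.

Lemma rev_sp m n k l s t q : simple_path_in_L m n k l s t q ->
  exists q', simple_path_in_L m n k l t s q' /\ size q' = size q.
Proof.
case=> Ha Hp Hu Hl.
have E : t :: rev (belast s q) = rev (s :: q) by rewrite [s :: q]lastI rev_rcons Hl.
exists (rev (belast s q)); split; last by rewrite size_rev size_belast.
split.
- by rewrite E all_rev.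
- rewrite -Hl rev_path; apply: sub_path Hp => x y; by rewrite sg_adj_sym.
- by rewrite E rev_uniq.
- have -> : last t (rev (belast s q)) = last t (t :: rev (belast s q)) by [].
  by rewrite E rev_cons last_rcons.
Qed.

Ltac nl := repeat match goal with H : ?T |- _ =>
  lazymatch T with
  | is_true (_ <= _) => fail | is_true (_ != _) => fail | @eq nat _ _ => fail
  | nat => fail | _ => clear H end end; lia.

Lemma core m k s t q : 3 <= m -> m - k = 1 -> simple_path_in_L m 3 k 1 s t q ->
  (s = (1,2) /\ t = (2,3)) \/ (s = (1,3) /\ t = (2,2)) -> size (s :: q) <= 2 * m.
Proof.
move=> m3 mk [Hall Hpath Hu Hl] Hst.
set P := s :: q in Hall Hu *.
set N := size P.
rewrite leqNgt; apply/negP => HN.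
have inP v : inL m 3 k 1 v -> v \in P.
  move=> Hv; apply/negPn/negP => vP.
  by have := @count_bound m k v P ltac:(lia) mk Hv vP Hall Hu; rewrite -/N; lia.
pose f i := nth s P i.
have key j v : j < N -> f j = v -> j = index v P.
  by move=> jN <-; rewrite /f index_uniq.
have inLf j : j < N -> inL m 3 k 1 (f j) by move=> jN; apply: (all_nthP s Hall).
have adj j : j.+1 < N -> sg_adj (f j) (f j.+1).
  by move=> jN; apply: (pathP s Hpath).
have key' j v : f j = v -> j < N -> j = index v P by move=> E jN; apply: key.
have prv j v : 0 < j < N -> f j = v -> sg_adj v (f j.-1) /\ j.-1 < N.
  move=> /andP[j0 jN] <-; split; last by lia.
  by rewrite sg_adj_sym; have := adj j.-1; rewrite prednK //; apply; lia.
have nxt j v : j.+1 < N -> f j = v -> sg_adj v (f j.+1) /\ j.+1 < N.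
  by move=> jN <-; split => //; apply: adj.
have getP v : v \in P -> f (index v P) = v /\ index v P < N.
  by move=> vP; rewrite /f nth_index // index_mem.
have f0 : f 0 = s by [].
have fN : f N.-1 = t by rewrite /f nth_last.
have i0 : index s P = 0 by apply/esym/key.
have iN : index t P = N.-1 by apply/esym/key => //; lia.
have N7 : 7 <= N by lia.
have h11 : inL m 3 k 1 (1,1) by rewrite /inL /=; lia.
have h13 : inL m 3 k 1 (1,3) by rewrite /inL /=; lia.
have h12 : inL m 3 k 1 (1,2) by rewrite /inL /=; lia.
have [fa aN] := getP _ (inP _ h11).
remember (index (1,1) P) as a eqn:ia.
have [fc cN] := getP _ (inP _ h13).
remember (index (1,3) P) as c eqn:ic.
have [fb bN] := getP _ (inP _ h12).
remember (index (1,2) P) as b eqn:ib.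
have ac : a != c by apply/eqP => E; rewrite E fc in fa.
have ab : a != b by apply/eqP => E; rewrite E fb in fa.
have bc : b != c by apply/eqP => E; rewrite E fc in fb.
have a0 : a != 0 by apply/eqP => E; move: fa; rewrite E f0; case: Hst => -[->].
have aN1 : a != N.-1 by apply/eqP => E; move: fa; rewrite E fN; case: Hst => -[_ ->].
have [Ap Ap'] := prv a _ ltac:(lia) fa.
have [An An'] := nxt a _ ltac:(lia) fa.
case: Hst => -[es et].
- have b0 : b = 0 by rewrite ib -es.
  have i23 : index (2,3) P = N.-1 by rewrite -et.
  have c0 : c != 0 by nl.
  case: (@nb11 m k _ mk Ap (inLf _ Ap')) => /key'/(_ Ap'); rewrite ?i23 -?ia -?ib -?ic; 
  case: (@nb11 m k _ mk An (inLf _ An')) => /key'/(_ An'); rewrite ?i23 -?ia -?ib -?ic => e1 e2; try nl.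
  have cN1 : c != N.-1 by apply/eqP => E; move: fc; rewrite E fN et.
  have [Cp Cp'] := prv c _ ltac:(nl) fc.
  have [Cn Cn'] := nxt c _ ltac:(nl) fc.
  case: (@nb13 m k _ mk Cp (inLf _ Cp')) => [|[|]] /key'/(_ Cp'); rewrite ?i23 -?ia -?ib -?ic => e3;
  case: (@nb13 m k _ mk Cn (inLf _ Cn')) => [|[|]] /key'/(_ Cn'); rewrite ?i23 -?ia -?ib -?ic => e4; nl.
- have c0 : c = 0 by rewrite ic -es.
  have i23 : index (2,2) P = N.-1 by rewrite -et.
  case: (@nb11 m k _ mk Ap (inLf _ Ap')) => /key'/(_ Ap'); rewrite ?i23 -?ia -?ib -?ic; 
  case: (@nb11 m k _ mk An (inLf _ An')) => /key'/(_ An'); rewrite ?i23 -?ia -?ib -?ic => e1 e2; try nl.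
  have [Bp Bp'] := prv b _ ltac:(nl) fb.
  have [Cn Cn'] := nxt c _ ltac:(nl) fc.
  case: (@nb12 m k _ mk Bp (inLf _ Bp')) => [|[|[|]]] /key'/(_ Bp'); rewrite ?i23 -?ia -?ib -?ic => e3;
  case: (@nb13 m k _ mk Cn (inLf _ Cn')) => [|[|]] /key'/(_ Cn'); rewrite ?i23 -?ia -?ib -?ic => e4; nl.
Qed.

Theorem lemma12 (m n k l : nat) (s t : pt) :
  1 < m -> 1 < n -> 1 <= k -> 1 <= l -> 1 <= m - k -> 1 <= n - l ->
  inL m n k l s -> inL m n k l t -> s <> t ->
  m - k = 1 -> n - l = 2 -> l = 1 -> 2 <= k ->
  ((s = (1, 2) /\ t = (2, 3)) \/ (s = (2, 3) /\ t = (1, 2)) \/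
   (s = (1, 3) /\ t = (2, 2)) \/ (s = (2, 2) /\ t = (1, 3))) ->
  forall q : seq pt, simple_path_in_L m n k l s t q ->
    size (s :: q) <= m * n - k * l - 1.
Proof.
move=> _ _ _ _ _ _ _ _ _ mk nl2 l1 k2 Hst q Hq.
subst l; have n3 : n = 3 by lia.
subst n.
have m3 : 3 <= m by lia.
suff : size (s :: q) <= 2 * m by lia.
case: Hst => [H|[H|[H|H]]].
- exact: @core _ _ _ _ _ m3 mk Hq (or_introl H).
- have [q' [Hq' sz]] := @rev_sp _ _ _ _ _ _ _ Hq.
  have := @core _ _ _ _ _ m3 mk Hq' (or_introl (conj (proj2 H) (proj1 H))).
  by rewrite /= sz.
- exact: @core _ _ _ _ _ m3 mk Hq (or_intror H).
- have [q' [Hq' sz]] := @rev_sp _ _ _ _ _ _ _ Hq.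
  have := @core _ _ _ _ _ m3 mk Hq' (or_intror (conj (proj2 H) (proj1 H))).
  by rewrite /= sz.
Qed.
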